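(* Let $\alpha\in(0,\infty)^T$ and $u_t(x)=\frac{1}{\alpha_t}[1-\exp(-\alpha_t x)]$, $t\in\mathbb{T}$. For $x\in\mathbb{R}$ and $Z\in L^\infty$, let $(X_t)\in\mathcal{A}(x-Z)$ be the optimal intertemporal allocation of $x-Z$, i.e. $\sum_{t\in\mathbb{T}}E[u_t(\tilde X_t)]=U(x-Z)$. Then $X_1=\frac{B_1}{\alpha_1}[\beta_1x-\log L_1(\alpha,-Z)]$ and, for $t=2,\dots,T$, $X_t=\frac{B_t}{\alpha_t}\Big[\beta_1x-\log L_t(\alpha,-Z)+\sum_{k=1}^{t-1}\frac{\beta_{k+1}}{\alpha_k}\log L_k(\alpha,-Z)\Big]$.
   Context: Let $T\ge 1$ be an integer and $\mathbb{T}=\{1,\dots,T\}$. Let $(\Omega,\mathcal{F},(\mathcal{F}_t)_{t\in\{0,1,\dots,T\}},P)$ be a filtered probability space and $L^{\infty}=L^{\infty}(\Omega,\mathcal{F}_T,P)$; write $E_t[Y]=E[Y\mid\mathcal{F}_t]$. Let $(r_t)_{t\in\mathbb{T}}$ be a bounded, nonnegative, predictable process, $B_0=1$, $B_t=\prod_{k=1}^t(1+r_k)$, and $\tilde X_t=X_t/B_t$. For $W\in L^\infty$, $\mathcal{A}(W)$ is the set of $(\mathcal{F}_t)$-adapted processes $(Y_t)_{t\in\mathbb{T}}$ with $Y_t\in L^\infty$ and $\sum_{t\in\mathbb{T}}\tilde Y_t=W$ a.s., and $U(W)=\sup\{\sum_{t\in\mathbb{T}}E[u_t(\tilde Y_t)]:(Y_t)\in\mathcal{A}(W)\}$.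 For $\alpha\in(0,\infty)^T$ define $\beta_t$ by $1/\beta_t=\sum_{k=t}^T 1/\alpha_k$. For $W\in L^\infty$ define $L_T(\alpha,W)=\exp(-\alpha_T W)$ and $L_{t-1}(\alpha,W)=E_{t-1}[L_t(\alpha,W)]^{\beta_{t-1}/\beta_t}$ for $t=2,\dots,T$. *)

(* Defs.v *)
From HB Require Import structures.
From mathcomp Require Import all_boot all_order all_algebra.
From mathcomp Require Import all_classical all_reals all_analysis.
Set Implicit Arguments. Unset Strict Implicit. Unset Printing Implicit Defensive.
Import Order.TTheory GRing.Theory Num.Theory.
Local Open Scope classical_set_scope.
Local Open Scope ring_scope.

Section Defs.
Context {d : measure_display} {Omega : measurableType d} {R : realType}.

Definition sub_measurable (G : set (set Omega)) (f : Omega -> R) : Prop :=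
  forall B : set R, measurable B -> G (f @^-1` B).

Definition filtration (T : nat) (F : nat -> set (set Omega)) : Prop :=
  (forall t, (t <= T)%N -> sigma_algebra setT (F t) /\ F t `<=` measurable) /\
  (forall s t, (s <= t)%N -> (t <= T)%N -> F s `<=` F t).

(* f is (a representative of) an element of L^infty(Omega, G, P) *)
Definition Linfty (P : probability Omega R) (G : set (set Omega)) (f : Omega -> R) :=
  sub_measurable G f /\ exists M : R, {ae P, forall w, `|f w| <= M}.

Definition is_cond_exp (P : probability Omega R) (G : set (set Omega))
    (Y C : Omega -> R) : Prop :=
  sub_measurable G C /\ P.-integrable setT (EFin \o C) /\
  forall A, G A -> (\int[P]_(w in A) (C w)%:E = \int[P]_(w in A) (Y w)%:E)%E.

Definition Bfac (r : nat -> Omega -> R) (t : nat) (w : Omega) : R :=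
  \prod_(1 <= k < t.+1) (1 + r k w).

Definition disc (r : nat -> Omega -> R) (X : nat -> Omega -> R) (t : nat)
  (w : Omega) : R := X t w / Bfac r t w.

Definition beta (T : nat) (alpha : nat -> R) (t : nat) : R :=
  (\sum_(t <= k < T.+1) (alpha k)^-1)^-1.

Definition admissible (P : probability Omega R) (T : nat) (F : nat -> set (set Omega))
    (r : nat -> Omega -> R) (W : Omega -> R) (Y : nat -> Omega -> R) : Prop :=
  (forall t, (1 <= t <= T)%N -> sub_measurable (F t) (Y t) /\ Linfty P (F T) (Y t)) /\
  {ae P, forall w, \sum_(1 <= t < T.+1) disc r Y t w = W w}.

Definition total_utility (P : probability Omega R) (T : nat) (u : nat -> R -> R)
    (r : nat -> Omega -> R) (Y : nat -> Omega -> R) : \bar R :=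
  (\sum_(1 <= t < T.+1) \int[P]_w (u t (disc r Y t w))%:E)%E.

Definition Uval (P : probability Omega R) (T : nat) (F : nat -> set (set Omega))
    (u : nat -> R -> R) (r : nat -> Omega -> R) (W : Omega -> R) : \bar R :=
  ereal_sup [set total_utility P T u r Y | Y in admissible P T F r W].

Definition is_L_family (P : probability Omega R) (T : nat) (F : nat -> set (set Omega))
    (alpha : nat -> R) (W : Omega -> R) (L : nat -> Omega -> R) : Prop :=
  (forall w, L T w = expR (- alpha T * W w)) /\
  (forall t, (2 <= t <= T)%N -> exists C : Omega -> R,
     is_cond_exp P (F t.-1) (L t) C /\
     forall w, L t.-1 w = powR (C w) (beta T alpha t.-1 / beta T alpha t)).

End Defs.

(* Main.v *)
Require Import Defs.
From HB Require Import structures.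
From mathcomp Require Import all_boot all_order all_algebra.
From mathcomp Require Import all_classical all_reals all_analysis.
From mathcomp Require Import measurable_realfun measurable_fun_approximation.
From mathcomp Require Import ring lra zify.
Import Order.TTheory GRing.Theory Num.Theory.
Local Open Scope classical_set_scope.
Local Open Scope ring_scope.

Section S.
Context {d : measure_display} {Omega : measurableType d} {R : realType}.
Variable P : probability Omega R.

Definition aebdd (f : Omega -> R) := exists K : R, {ae P, forall w, `|f w| <= K}.

Lemma int_bdd f : measurable_fun setT f -> aebdd f -> P.-integrable setT (EFin \o f).
Proof.
move=> mf [K hK]; apply/integrableP; split; first exact/measurable_EFinP.
have K0 : (0 <= (Num.max K 0)%:E)%E by rewrite lee_fin le_max lexx orbT.
have H := @integral_le_bound _ _ _ P setT (EFin \o f) _ measurableT _ K0.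
apply: (le_lt_trans (H _ _)).
- exact/measurable_EFinP.
- apply: filterS hK => w h _ /=; rewrite lee_fin (le_trans h)// le_max lexx//.
apply: lte_mul_pinfty => //.
exact: (le_lt_trans (probability_le1 P measurableT) (ltry 1)).
Qed.

Arguments int_bdd {f}.

Lemma CE0 (G : set (set Omega)) (hG : sigma_algebra setT G) (sGm : G `<=` measurable)
  (Y C : Omega -> R) (mY : measurable_fun setT Y) (mC : measurable_fun setT C)
  (Y0 : forall w, 0 <= Y w) (C0 : forall w, 0 <= C w)
  (hYC : forall A, G A -> (\int[P]_(w in A) (Y w)%:E = \int[P]_(w in A) (C w)%:E)%E)
  (f : Omega -> R) (mf : measurable_fun (setT : set (g_sigma_algebraType G)) f)
  (f0 : forall w, 0 <= f w) :
  (\int[P]_w (Y w * f w)%:E = \int[P]_w (C w * f w)%:E)%E.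
Proof.
pose gT := g_sigma_algebraType G.
have mEf : measurable_fun (setT : set gT) (EFin \o f) by exact/measurable_EFinP.
pose A n k := dyadic_approx (setT : set gT) (EFin \o f) n k.
pose B n := integer_approx (setT : set gT) (EFin \o f) n.
have GE : forall S : set gT, measurable S -> G S.
  by move=> S; rewrite /measurable /=; rewrite sigma_algebra_id.
have mpre (S : set (\bar R)) : measurable S -> G (setT `&` (EFin \o f) @^-1` S).
  by move=> mS; apply: GE; exact: mEf.
have GA n k : G (A n k).
  rewrite /A /dyadic_approx; case: ifPn => [_|_]; last first.
    by apply: GE; exact: measurable0.
  have -> : [set x | (EFin \o f) x \in EFin @` [set` dyadic_itv R n k]] =
     (EFin \o f) @^-1` (EFin @` [set` dyadic_itv R n k]).
    by apply/seteqP; split => x /=; rewrite inE.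
  by apply: mpre; apply/measurable_image_EFin; exact: measurable_itv.
have GB n : G (B n).
  rewrite /B /integer_approx.
  have -> : [set x | (n%:R%:E <= (EFin \o f) x)%E] =
     (EFin \o f) @^-1` `[n%:R%:E, +oo[%classic.
    by apply/seteqP; split => x /=; rewrite in_itv /= andbT.
  by apply: mpre; exact: emeasurable_itv.
have mA n k : measurable (A n k : set Omega) by exact: sGm.
have mB n : measurable (B n : set Omega) by exact: sGm.
pose ap n : Omega -> R := approx (setT : set gT) (EFin \o f) n.
have indI (V : Omega -> R) (S : set Omega) : measurable S ->
    (\int[P]_w (V w * \1_S w)%:E = \int[P]_(w in S) (V w)%:E)%E.
  move=> mS; rewrite [RHS]integral_mkcond; apply: eq_integral => w _.
  by rewrite /patch indicE; case: ifPn => wS; rewrite ?mulr1 ?mulr0.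
have step (V : Omega -> R) : measurable_fun setT V -> (forall w, 0 <= V w) -> forall n,
   (\int[P]_w (V w * ap n w)%:E = \sum_(k < n * 2 ^ n) ((k%:R * 2 ^- n)%:E *
       \int[P]_(w in A n k) (V w)%:E) + n%:R%:E * \int[P]_(w in B n) (V w)%:E)%E.
  move=> mV V0 n.
  rewrite (eq_integral (fun w => (\sum_(k < n * 2 ^ n) (k%:R * 2 ^- n)%:E * (V w * \1_(A n k) w)%:E)
      + (n%:R)%:E * (V w * \1_(B n) w)%:E)%E); last first.
    move=> w _; rewrite /ap /approx mulrDr EFinD mulr_sumr sumEFin; congr (_ + _)%E.
      by congr (_%:E); apply: eq_bigr => k _; rewrite mulrCA.
    by rewrite -EFinM mulrCA.
  have mterm c (S : set Omega) : measurable S ->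
      measurable_fun setT (fun w => (c%:E * (V w * \1_S w)%:E)%E).
    move=> mS; apply: (proj2 (measurable_EFinP _ (fun w => c * (V w * \1_S w)))).
    apply: measurable_funM; first exact: measurable_cst.
    by apply: measurable_funM => //; exact: measurable_indic.
  have tge0 c (S : set Omega) w : 0 <= c -> (0 <= c%:E * (V w * \1_S w)%:E)%E.
    by move=> c0; rewrite -EFinM lee_fin mulr_ge0// mulr_ge0.
  rewrite ge0_integralD//; last 4 first.
  - by move=> w _; apply: sume_ge0 => k _; apply: tge0.
  - by apply: emeasurable_sum => k; exact: mterm.
  - by move=> w _; apply: tge0.
  - exact: mterm.
  rewrite ge0_integral_sum//; last 2 first.
  - by move=> k; exact: mterm.
  - by move=> k w _; apply: tge0.
  have mVS (S : set Omega) : measurable S -> measurable_fun setT (fun w => (V w * \1_S w)%:E).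
    move=> mS; apply: (proj2 (measurable_EFinP _ (fun w => V w * \1_S w))).
    by apply: measurable_funM => //; exact: measurable_indic.
  congr (_ + _)%E.
    apply: eq_bigr => k _; rewrite ge0_integralZl_EFin//; last 2 first.
    - by move=> w _; rewrite lee_fin mulr_ge0.
    - exact: mVS.
    by rewrite indI.
  rewrite ge0_integralZl_EFin//.
  - by rewrite indI.
  - by move=> w _; rewrite lee_fin mulr_ge0.
  - exact: mVS.
have lim (V : Omega -> R) w : (V w * f w)%:E = limn (fun n => (V w * ap n w)%:E).
  apply/esym/cvg_lim => //; apply/cvg_EFin; first exact: nearW.
  apply: cvgMr; rewrite /ap.
  exact: (@cvg_approx _ gT R setT (EFin \o f) w (fun x _ => f0 x) Logic.I (ltry _)).
have mon (V : Omega -> R) : measurable_fun setT V -> (forall w, 0 <= V w) ->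
    (\int[P]_w (V w * f w)%:E = limn (fun n => \int[P]_w (V w * ap n w)%:E))%E.
  move=> mV V0; rewrite (eq_integral (fun w => limn (fun n => (V w * ap n w)%:E))); last first.
    by move=> w _; exact: lim.
  apply: monotone_convergence => //.
  - move=> n; apply/measurable_EFinP; apply: measurable_funM => //.
    rewrite /ap /approx; apply: measurable_funD.
      apply: measurable_sum => k; apply: measurable_funM; first exact: measurable_cst.
      exact: measurable_indic.
    apply: measurable_funM; first exact: measurable_cst.
    exact: measurable_indic.
  - move=> n w _; rewrite lee_fin mulr_ge0//.
    rewrite /ap /approx; apply: addr_ge0; last by rewrite mulr_ge0.
    by apply: sumr_ge0 => k _; rewrite mulr_ge0// mulr_ge0.
  - move=> w _ m n mn; rewrite lee_fin ler_wpM2l//.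
    exact/lefP/nd_approx.
rewrite (mon Y mY Y0) (mon C mC C0); apply: congr_lim; apply/funext => n.
rewrite (step Y mY Y0) (step C mC C0) (hYC _ (GB n)); congr (_ + _)%E.
by apply: eq_bigr => k _; rewrite (hYC _ (GA n k)).
Qed.

Lemma smeasP (G : set (set Omega)) (hG : sigma_algebra setT G) (f : Omega -> R) :
  sub_measurable G f <-> measurable_fun (setT : set (g_sigma_algebraType G)) f.
Proof.
rewrite /sub_measurable; split.
- move=> h _ B mB; rewrite setTI.
  change (<<s G >> (f @^-1` B)). rewrite sigma_algebra_id //. exact: h.
- move=> h B mB. have := h measurableT B mB. rewrite setTI.
  change (<<s G >> (f @^-1` B) -> G (f @^-1` B)). by rewrite sigma_algebra_id.
Qed.
Arguments smeasP {G} hG {f}.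

Lemma smeas_meas (G : set (set Omega)) (sGm : G `<=` measurable) (f : Omega -> R) :
  sub_measurable G f -> measurable_fun setT f.
Proof. by move=> h _ B mB; rewrite setTI; apply: sGm; exact: h. Qed.
Arguments smeas_meas {G} sGm {f}.

Lemma aebdd_cst c : aebdd (fun _ => c).
Proof. by exists `|c|; apply: aeW => w. Qed.

Lemma aebdd_le f K : (forall w, `|f w| <= K) -> aebdd f.
Proof. by move=> h; exists K; apply: aeW. Qed.

Lemma aebddD f g : aebdd f -> aebdd g -> aebdd (fun w => f w + g w).
Proof.
move=> [K1 h1] [K2 h2]; exists (K1 + K2); apply: filterS2 h1 h2 => w a b.
by rewrite (le_trans (ler_normD _ _))// lerD.
Qed.

Lemma aebddN f : aebdd f -> aebdd (fun w => - f w).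
Proof. by move=> [K h]; exists K; apply: filterS h => w; rewrite normrN. Qed.

Lemma aebddB f g : aebdd f -> aebdd g -> aebdd (fun w => f w - g w).
Proof. by move=> hf hg; apply: aebddD => //; exact: aebddN. Qed.

Lemma aebddM f g : aebdd f -> aebdd g -> aebdd (fun w => f w * g w).
Proof.
move=> [K1 h1] [K2 h2]; exists (K1 * K2); apply: filterS2 h1 h2 => w a b.
by rewrite normrM ler_pM.
Qed.

Lemma aebdd_ae f g : aebdd f -> {ae P, forall w, f w = g w} -> aebdd g.
Proof. by move=> [K h] e; exists K; apply: filterS2 h e => w a <-. Qed.

Lemma aebdd_sum (F : nat -> Omega -> R) a b :
  (forall k, (a <= k < b)%N -> aebdd (F k)) ->
  aebdd (fun w => \sum_(a <= k < b) F k w).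
Proof.
elim: b => [|b IH] h.
  by exists 0; apply: aeW => w; rewrite big_geq ?normr0.
have [ab|ba] := leqP a b.
  have -> : (fun w => \sum_(a <= k < b.+1) F k w) =
      (fun w => \sum_(a <= k < b) F k w + F b w).
    by apply/funext => w; rewrite big_nat_recr.
  apply: aebddD; first by apply: IH => k /andP[ak kb]; apply: h; rewrite ak ltnS ltnW.
  by apply: h; rewrite ab leqnn.
by exists 0; apply: aeW => w; rewrite big_geq ?normr0.
Qed.

Lemma int_ge0_ae (A : set Omega) (mA : measurable A) (g : Omega -> R) :
  measurable_fun setT g -> {ae P, forall w, 0 <= g w} ->
  (0 <= \int[P]_(w in A) (g w)%:E)%E.
Proof.
move=> mg hg.
rewrite (@ae_eq_integral _ _ _ P A (fun w => (Num.max (g w) 0)%:E)) //.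
- by apply: integral_ge0 => w _; rewrite lee_fin le_max lexx orbT.
- by apply/measurable_EFinP; apply: measurable_funS mg.
- apply/measurable_EFinP; apply: measurable_maxr; last exact: measurable_cst.
  exact: measurable_funS mg.
- by apply: filterS hg => w g0 _; rewrite max_l.
Qed.

Lemma finE (x : \bar R) : x \is a fin_num -> exists r : R, x = r%:E.
Proof. by move=> h; exists (fine x); rewrite fineK. Qed.
Arguments finE {x}.

Lemma CElo (G : set (set Omega)) (hG : sigma_algebra setT G) (sGm : G `<=` measurable)
  (Y C : Omega -> R) (mY : measurable_fun setT Y) (hC : sub_measurable G C)
  (iY : P.-integrable setT (EFin \o Y)) (iC : P.-integrable setT (EFin \o C))
  (hYC : forall A, G A -> (\int[P]_(w in A) (Y w)%:E = \int[P]_(w in A) (C w)%:E)%E)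
  (m : R) (hm : {ae P, forall w, m <= Y w}) : {ae P, forall w, m <= C w}.
Proof.
have mC := smeas_meas sGm hC.
pose A := C @^-1` `]-oo, m[.
have GA : G A by apply: hC; exact: measurable_itv.
have mA : measurable A := sGm _ GA.
have iA (g : Omega -> R) : P.-integrable setT (EFin \o g) -> P.-integrable A (EFin \o g).
  by move=> ig; apply: integrableS ig.
have icst : P.-integrable setT (EFin \o (fun _ : Omega => m)).
  by apply: int_bdd; [exact: measurable_cst|exact: aebdd_cst].
have [a ha] := finE (integrable_fin_num mA (iA _ iC)).
have [b hb] := finE (integrable_fin_num mA (iA _ iY)).
have [c hc] : exists c : R, (\int[P]_(w in A) (m%:E))%E = c%:E.
  by apply: finE; exact: (integrable_fin_num mA (iA _ icst)).
have e1 : (\int[P]_(w in A) ((m - C w)%:E) = (c - a)%:E)%E.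
  by rewrite (integralB_EFin mA (iA _ icst) (iA _ iC)) -/(EFin \o _) hc ha.
have e2 : (\int[P]_(w in A) ((Y w - m)%:E) = (b - c)%:E)%E.
  by rewrite (integralB_EFin mA (iA _ iY) (iA _ icst)) hc hb.
have ab : a = b by apply: EFin_inj; rewrite -ha -hb hYC.
have g1 : (0 <= (c - a)%:E)%E.
  rewrite -e1; apply: integral_ge0 => w Aw; rewrite lee_fin subr_ge0.
  by move: Aw; rewrite /A /= in_itv /= => /ltW.
have g2 : (0 <= (b - c)%:E)%E.
  rewrite -e2; apply: int_ge0_ae => //.
  - by apply: measurable_funB => //; exact: measurable_cst.
  - by apply: filterS hm => w; rewrite subr_ge0.
move: g1 g2; rewrite !lee_fin => g1 g2.
have e0 : (\int[P]_(w in A) `|(m - C w)%:E| = 0)%E.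
  rewrite -(_ : (\int[P]_(w in A) ((m - C w)%:E) = 0)%E); last first.
    by rewrite e1; congr (_%:E); lra.
  apply: eq_integral => w; rewrite inE /A /= in_itv /= => Cw.
  by rewrite ger0_norm // subr_ge0 ltW.
have mf : measurable_fun A (fun w => (m - C w)%:E).
  apply: (proj2 (measurable_EFinP _ (fun w => m - C w))).
  apply: measurable_funB; first exact: measurable_cst.
  exact: measurable_funS mC.
have := (@ae_eq_integral_abs _ _ _ P A mA _ mf).1 e0.
apply: filterS => w hw; rewrite leNgt; apply/negP => Cw.
have Aw : A w by rewrite /A /= in_itv /=.
have := hw Aw; move=> /= [] /eqP; rewrite subr_eq0 => /eqP mC'.
by move: Cw; rewrite mC' ltxx.
Qed.

Lemma CEhi (G : set (set Omega)) (hG : sigma_algebra setT G) (sGm : G `<=` measurable)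
  (Y C : Omega -> R) (mY : measurable_fun setT Y) (hC : sub_measurable G C)
  (iY : P.-integrable setT (EFin \o Y)) (iC : P.-integrable setT (EFin \o C))
  (hYC : forall A, G A -> (\int[P]_(w in A) (Y w)%:E = \int[P]_(w in A) (C w)%:E)%E)
  (M : R) (hM : {ae P, forall w, Y w <= M}) : {ae P, forall w, C w <= M}.
Proof.
have h := @CElo G hG sGm (fun w => - Y w) (fun w => - C w).
have mN : measurable_fun setT (fun w => - Y w) by exact: measurable_funN.
have hN : sub_measurable G (fun w => - C w).
  apply/(smeasP hG); apply: measurable_funN; exact/(smeasP hG).
have iYN : P.-integrable setT (EFin \o (fun w => - Y w)) by exact: (integrableN iY).
have iCN : P.-integrable setT (EFin \o (fun w => - C w)) by exact: (integrableN iC).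
have hYCN : forall A, G A ->
    (\int[P]_(w in A) (- Y w)%:E = \int[P]_(w in A) (- C w)%:E)%E.
  move=> A GA; have mA := sGm _ GA.
  rewrite (_ : (fun w => (- Y w)%:E) = (fun w => - (Y w)%:E)%E) //.
  rewrite (_ : (fun w => (- C w)%:E) = (fun w => - (C w)%:E)%E) //.
  rewrite integralN; last by apply: integrable_add_def => //; exact: (integrableS measurableT mA (subsetT A) iY).
  rewrite integralN; last by apply: integrable_add_def => //; exact: (integrableS measurableT mA (subsetT A) iC).
  by rewrite hYC.
have := h mN hN iYN iCN hYCN (- M).
have hm : {ae P, forall w, - M <= - Y w} by apply: filterS hM => w; rewrite lerN2.
move=> /(_ hm); apply: filterS => w; by rewrite lerN2.
Qed.

Lemma CE0' (G : set (set Omega)) (hG : sigma_algebra setT G) (sGm : G `<=` measurable)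
  (Y C : Omega -> R) (mY : measurable_fun setT Y) (mC : measurable_fun setT C)
  (Y0 : forall w, 0 <= Y w) (C0 : forall w, 0 <= C w)
  (bY : aebdd Y) (bC : aebdd C)
  (hYC : forall A, G A -> (\int[P]_(w in A) (Y w)%:E = \int[P]_(w in A) (C w)%:E)%E)
  (f : Omega -> R) (hf : sub_measurable G f) (K : R) (fK : forall w, `|f w| <= K) :
  (\int[P]_w (Y w * f w)%:E = \int[P]_w (C w * f w)%:E)%E.
Proof.
have mfG : measurable_fun (setT : set (g_sigma_algebraType G)) f by exact/(smeasP hG).
have mf := smeas_meas sGm hf.
have mfK : measurable_fun (setT : set (g_sigma_algebraType G)) (fun w => f w + K).
  by apply: measurable_funD => //; exact: measurable_cst.
have fK0 w : 0 <= f w + K.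
  by have := fK w; rewrite ler_norml => /andP[h _]; lra.
have K0 : 0 <= K by exact: (le_trans (normr_ge0 _) (fK point)).
have e1 := @CE0 G hG sGm Y C mY mC Y0 C0 hYC _ mfK fK0.
have e2 := @CE0 G hG sGm Y C mY mC Y0 C0 hYC (fun _ => K) (measurable_cst _) (fun=> K0).
have bf : aebdd f := @aebdd_le f K fK.
have iM (V : Omega -> R) (g : Omega -> R) : measurable_fun setT V -> aebdd V ->
    measurable_fun setT g -> aebdd g -> P.-integrable setT (EFin \o (fun w => V w * g w)).
  by move=> mV bV mg bg; apply: int_bdd; [exact: measurable_funM|exact: aebddM].
have split (V : Omega -> R) : measurable_fun setT V -> aebdd V ->
   (\int[P]_w (V w * (f w + K))%:E = \int[P]_w (V w * f w)%:E + \int[P]_w (V w * K)%:E)%E.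
  move=> mV bV; rewrite -integralD_EFin //; last 2 first.
  1,2: by apply: iM => //; solve [exact: measurable_cst|exact: aebdd_cst].
  by apply: eq_integral => w _; rewrite mulrDr.
move: e1; rewrite (split Y mY bY) (split C mC bC) e2 => e1.
have fin : (\int[P]_w (C w * K)%:E)%E \is a fin_num.
  by apply: integrable_fin_num => //; apply: iM => //; solve [exact: measurable_cst|exact: aebdd_cst].
by rewrite -(addeK (\int[P]_w (Y w * f w)%:E)%E fin) e1 addeK.
Qed.

Lemma CEbounds (G : set (set Omega)) (hG : sigma_algebra setT G) (sGm : G `<=` measurable)
  (Y C : Omega -> R) (hce : is_cond_exp P G Y C) (mY : measurable_fun setT Y)
  (bY : aebdd Y) (m M : R) (hmM : {ae P, forall w, m <= Y w <= M}) :
  {ae P, forall w, m <= C w <= M}.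
Proof.
case: hce => hC [iC hYC0]; have iY := int_bdd mY bY.
have hYC := fun A GA => esym (hYC0 A GA).
have h1 := @CElo G hG sGm Y C mY hC iY iC hYC m.
have h2 := @CEhi G hG sGm Y C mY hC iY iC hYC M.
have a1 : {ae P, forall w, m <= Y w} by apply: filterS hmM => w /andP[].
have a2 : {ae P, forall w, Y w <= M} by apply: filterS hmM => w /andP[].
by apply: filterS2 (h1 a1) (h2 a2) => w a b; rewrite a b.
Qed.

Lemma CEapp (G : set (set Omega)) (hG : sigma_algebra setT G) (sGm : G `<=` measurable)
  (Y C : Omega -> R) (hce : is_cond_exp P G Y C) (mY : measurable_fun setT Y)
  (Y0 : forall w, 0 <= Y w) (bY : aebdd Y)
  (f : Omega -> R) (hf : sub_measurable G f) (bf : aebdd f) :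
  (\int[P]_w (Y w * f w)%:E = \int[P]_w (C w * f w)%:E)%E.
Proof.
have hce' := hce; case: hce' => hC [iC hYC0]; have iY := int_bdd mY bY.
have hYC := fun A GA => esym (hYC0 A GA).
have mC := smeas_meas sGm hC.
have [K hK] := bY.
have Cb : {ae P, forall w, - K <= C w <= K}.
  apply: (@CEbounds G hG sGm Y C hce mY bY).
  by apply: filterS hK => w; rewrite ler_norml.
have C0 : {ae P, forall w, 0 <= C w}.
  by apply: (@CElo G hG sGm Y C mY hC iY iC hYC 0); apply: aeW.
pose C' w := Num.max (C w) 0.
have eC : {ae P, forall w, C w = C' w} by apply: filterS C0 => w c0; rewrite /C' max_l.
have mC' : measurable_fun setT C'.
  by apply: measurable_maxr => //; exact: measurable_cst.
have C'0 w : 0 <= C' w by rewrite /C' le_max lexx orbT.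
have bC' : aebdd C'.
  exists K; apply: filterS2 Cb eC => w + <-; by rewrite ler_norml.
have hYC' : forall A, G A -> (\int[P]_(w in A) (Y w)%:E = \int[P]_(w in A) (C' w)%:E)%E.
  move=> A GA; rewrite hYC //; apply: ae_eq_integral => //.
  - exact: sGm.
  - by apply/measurable_EFinP; exact: measurable_funS mC.
  - by apply/measurable_EFinP; exact: measurable_funS mC'.
  - by apply: filterS eC => w -> _.
have [Kf hKf] := bf.
pose Kf' := Num.max Kf 0.
pose f' w := Num.max (- Kf') (Num.min (f w) Kf').
have mfG : measurable_fun (setT : set (g_sigma_algebraType G)) f by exact/(smeasP hG).
have hf' : sub_measurable G f'.
  apply/(smeasP hG); apply: measurable_maxr; first exact: measurable_cst.
  by apply: measurable_minr => //; exact: measurable_cst.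
have f'K w : `|f' w| <= Kf'.
  rewrite /f' ler_norml; apply/andP; split; first by rewrite le_max lexx.
  have Kf'0 : 0 <= Kf' by rewrite le_max lexx orbT.
  rewrite ge_max; apply/andP; split; last by rewrite ge_min lexx orbT.
  lra.
have ef : {ae P, forall w, f w = f' w}.
  apply: filterS hKf => w hw; rewrite /f'.
  have : Num.min (f w) Kf' = f w by rewrite min_l // (le_trans (ler_norm _)) // (le_trans hw) // le_max lexx.
  move=> ->; rewrite max_r //; move: hw; rewrite ler_norml => /andP[hw _].
  by rewrite (le_trans _ hw) // lerN2 le_max lexx.
have mf := smeas_meas sGm hf.
have mf' := smeas_meas sGm hf'.
rewrite (@ae_eq_integral _ _ _ P setT (fun w => (Y w * f' w)%:E)) //; last 3 first.
- by apply/measurable_EFinP; exact: measurable_funM.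
- by apply/measurable_EFinP; exact: measurable_funM.
- by apply: filterS ef => w -> _.
rewrite (@CE0' G hG sGm Y C' mY mC' Y0 C'0 bY bC' hYC' f' hf' Kf' f'K).
apply: ae_eq_integral => //.
- by apply/measurable_EFinP; exact: measurable_funM.
- by apply/measurable_EFinP; exact: measurable_funM.
- by apply: filterS2 eC ef => w -> -> _.
Qed.

End S.
Arguments smeasP {d Omega R G} hG {f}.
Arguments smeas_meas {d Omega R G} sGm {f}.
Arguments int_bdd {d Omega R} P {f}.
Arguments finE {R x}.

Section S2.
Context {d : measure_display} {Omega : measurableType d} {R : realType}.
Variable P : probability Omega R.

Section smG.
Variables (G : set (set Omega)) (hG : sigma_algebra setT G).

Lemma sm_cst (c : R) : sub_measurable G (fun _ => c).
Proof. by apply/(smeasP hG); exact: measurable_cst. Qed.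

Lemma sm_add (f g : Omega -> R) : sub_measurable G f -> sub_measurable G g ->
  sub_measurable G (fun w => f w + g w).
Proof. by move=> /(smeasP hG) hf /(smeasP hG) hg; apply/(smeasP hG); exact: measurable_funD. Qed.

Lemma sm_mul (f g : Omega -> R) : sub_measurable G f -> sub_measurable G g ->
  sub_measurable G (fun w => f w * g w).
Proof. by move=> /(smeasP hG) hf /(smeasP hG) hg; apply/(smeasP hG); exact: measurable_funM. Qed.

Lemma sm_comp (h : R -> R) (mh : measurable_fun setT h) (f : Omega -> R) : sub_measurable G f ->
  sub_measurable G (fun w => h (f w)).
Proof. by move=> /(smeasP hG) hf; apply/(smeasP hG); exact: measurableT_comp. Qed.

Lemma sm_opp (f : Omega -> R) : sub_measurable G f -> sub_measurable G (fun w => - f w).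
Proof. by move=> /(smeasP hG) hf; apply/(smeasP hG); exact: measurable_funN. Qed.

Lemma sm_sub (f g : Omega -> R) : sub_measurable G f -> sub_measurable G g ->
  sub_measurable G (fun w => f w - g w).
Proof. by move=> hf hg; apply: sm_add => //; exact: sm_opp. Qed.

Lemma sm_sum (F : nat -> Omega -> R) a b :
  (forall k, (a <= k < b)%N -> sub_measurable G (F k)) ->
  sub_measurable G (fun w => \sum_(a <= k < b) F k w).
Proof.
elim: b => [|b IH] h.
  by rewrite (_ : (fun w => _) = fun=> 0); [exact: sm_cst|apply/funext => w; rewrite big_geq].
have [ab|ba] := leqP a b.
  rewrite (_ : (fun w => _) = (fun w => \sum_(a <= k < b) F k w + F b w)); last first.
    by apply/funext => w; rewrite big_nat_recr.
  apply: sm_add; first by apply: IH => k /andP[ak kb]; apply: h; rewrite ak ltnS ltnW.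
  by apply: h; rewrite ab leqnn.
by rewrite (_ : (fun w => _) = fun=> 0); [exact: sm_cst|apply/funext => w; rewrite big_geq].
Qed.

End smG.

Lemma sm_mono (G1 G2 : set (set Omega)) (f : Omega -> R) : G1 `<=` G2 ->
  sub_measurable G1 f -> sub_measurable G2 f.
Proof. by move=> h hf B mB; apply: h; exact: hf. Qed.

Lemma aebdd_expR (f : Omega -> R) : aebdd P f -> aebdd P (fun w => expR (f w)).
Proof.
move=> [K hK]; exists (expR K); apply: filterS hK => w h.
rewrite ger0_norm ?expR_ge0 // ler_expR (le_trans (ler_norm _)) //.
Qed.

Lemma aebdd_sum' (F : nat -> Omega -> R) a b :
  (forall k, (a <= k < b)%N -> aebdd P (F k)) ->
  aebdd P (fun w => \sum_(a <= k < b) F k w).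
Proof. exact: aebdd_sum. Qed.

End S2.

Lemma telesc {R : realFieldType} (T : nat) (ia q l : nat -> R) (n : nat) :
  (n <= T)%N ->
  \sum_(1 <= t < n.+1) ia t * (\sum_(1 <= k < t) q k * l k) =
  \sum_(1 <= k < n.+1) q k * l k * (\sum_(k.+1 <= i < T.+1) ia i - \sum_(n.+1 <= i < T.+1) ia i).
Proof.
elim: n => [|n IH] nT.
  by rewrite !big_geq.
rewrite big_nat_recr //= IH ?(ltnW nT) //.
rewrite [in RHS]big_nat_recr //= subrr mulr0 addr0.
have H : \sum_(n.+1 <= i < T.+1) ia i = ia n.+1 + \sum_(n.+2 <= i < T.+1) ia i.
  by rewrite big_ltn // ltnS.
rewrite H.
have -> : \sum_(1 <= k < n.+1) q k * l k * (\sum_(k.+1 <= i < T.+1) ia i - \sum_(n.+2 <= i < T.+1) ia i)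
  = \sum_(1 <= k < n.+1) q k * l k * (\sum_(k.+1 <= i < T.+1) ia i - (ia n.+1 + \sum_(n.+2 <= i < T.+1) ia i))
    + ia n.+1 * \sum_(1 <= k < n.+1) q k * l k.
  rewrite mulr_sumr -big_split /=; apply: eq_bigr => k _; ring.
by [].
Qed.
Arguments sm_cst {d Omega R G} hG c.
Arguments sm_add {d Omega R G} hG {f g}.
Arguments sm_mul {d Omega R G} hG {f g}.
Arguments sm_comp {d Omega R G} hG {h} mh {f}.
Arguments sm_opp {d Omega R G} hG {f}.
Arguments sm_sub {d Omega R G} hG {f g}.
Arguments sm_sum {d Omega R G} hG {F a b}.

Section Main.
Context {d : measure_display} {Omega : measurableType d} {R : realType}.
Variables (P : probability Omega R) (T : nat) (hT : (1 <= T)%N)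
  (F : nat -> set (set Omega)) (hF : filtration T F)
  (r : nat -> Omega -> R)
  (hr_bdd : exists M : R, forall t w, (1 <= t <= T)%N -> 0 <= r t w <= M)
  (hr_pred : forall t, (1 <= t <= T)%N -> sub_measurable (F t.-1) (r t))
  (alpha : nat -> R) (halpha : forall t, (1 <= t <= T)%N -> 0 < alpha t)
  (x : R) (Z : Omega -> R) (hZ : Linfty P (F T) Z)
  (L : nat -> Omega -> R) (hL : is_L_family P T F alpha (fun w => - Z w) L).

Local Notation b := (beta T alpha).

Lemma hFs {t} : (t <= T)%N -> sigma_algebra setT (F t).
Proof. by move=> tT; case: hF => h _; case: (h t tT). Qed.

Lemma hFm {t} : (t <= T)%N -> F t `<=` measurable.
Proof. by move=> tT; case: hF => h _; case: (h t tT). Qed.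

Lemma hFmono s t : (s <= t)%N -> (t <= T)%N -> F s `<=` F t.
Proof. by case: hF => _ h; exact: h. Qed.

Lemma smT {t} {f : Omega -> R} : (t <= T)%N -> sub_measurable (F t) f -> measurable_fun setT f.
Proof. by move=> tT; apply: smeas_meas; exact: hFm. Qed.

Lemma sm_up s t (f : Omega -> R) : (s <= t)%N -> (t <= T)%N ->
  sub_measurable (F s) f -> sub_measurable (F t) f.
Proof. by move=> st tT; apply: sm_mono; exact: hFmono. Qed.

Lemma beta_inv t : (b t)^-1 = \sum_(t <= k < T.+1) (alpha k)^-1.
Proof. by rewrite /beta invrK. Qed.

Lemma beta_gt0 {t} : (1 <= t <= T)%N -> 0 < b t.
Proof.
move=> /andP[t1 tT]; rewrite -invr_gt0 beta_inv big_ltn ?ltnS //.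
rewrite ltr_wpDr //; last by rewrite invr_gt0 halpha // t1.
rewrite big_nat_cond; apply: sumr_ge0 => k /andP[/andP[tk kT] _].
by rewrite invr_ge0 ltW // halpha // (leq_trans t1 (ltnW tk)) -ltnS.
Qed.

Lemma beta_rec t : (1 <= t)%N -> (t < T)%N -> (b t)^-1 = (alpha t)^-1 + (b t.+1)^-1.
Proof. by move=> t1 tT; rewrite !beta_inv big_ltn // ltnS ltnW. Qed.

Lemma alpha_neq0 {t} : (1 <= t <= T)%N -> alpha t != 0.
Proof. by move=> h; rewrite gt_eqF // halpha. Qed.

Lemma beta_neq0 {t} : (1 <= t <= T)%N -> b t != 0.
Proof. by move=> h; rewrite gt_eqF // beta_gt0. Qed.

Lemma L_T_eq w : L T w = expR (alpha T * Z w).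
Proof. by case: hL => h _; rewrite h mulrNN. Qed.

Lemma L_rec s : (1 <= s)%N -> (s < T)%N -> exists C, is_cond_exp P (F s) (L s.+1) C /\
  forall w, L s w = powR (C w) (b s / b s.+1).
Proof.
move=> s1 sT; case: hL => _ h.
have := h s.+1; rewrite ltnS s1 sT /= => /(_ isT) [C [hC hC']].
by exists C; split.
Qed.

Definition Lprop t := sub_measurable (F t) (L t) /\ (forall w, 0 <= L t w) /\
  exists m M, 0 < m /\ {ae P, forall w, m <= L t w <= M}.

Lemma L_props_aux k : (k < T)%N -> Lprop (T - k).
Proof.
elim: k => [_|k IH kT].
  rewrite subn0; split; [|split].
  - rewrite (_ : L T = fun w => expR (alpha T * Z w)); last by apply/funext => w; rewrite L_T_eq.
    apply: (@sm_comp _ _ _ _ (hFs (leqnn T)) expR (@measurable_expR R) (fun w => alpha T * Z w)).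
    by apply: (sm_mul (hFs (leqnn T))); [exact: (sm_cst (hFs (leqnn T)))|case: hZ].
  - by move=> w; rewrite L_T_eq expR_ge0.
  - case: hZ => _ [K hK].
    have aT : 0 < alpha T by apply: halpha; rewrite hT leqnn.
    exists (expR (alpha T * - K)), (expR (alpha T * K)); split; first exact: expR_gt0.
    apply: filterS hK => w; rewrite ler_norml => /andP[h1 h2].
    by rewrite L_T_eq !ler_expR !ler_pM2l // h1 h2.
have [sm [L0 [m [M [m0 hmM]]]]] := IH (ltnW kT).
set s := (T - k.+1)%N.
have s1 : (1 <= s)%N by rewrite /s; lia.
have sT : (s < T)%N by rewrite /s; lia.
have sS : s.+1 = (T - k)%N by rewrite /s; lia.
have [C [hce hLs]] := L_rec s s1 sT.
rewrite -sS in sm L0 hmM.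
have hFs1 : (s.+1 <= T)%N by [].
have mY : measurable_fun setT (L s.+1) by exact: (smT hFs1).
have bY : aebdd P (L s.+1).
  exists M; apply: filterS hmM => w /andP[h1 h2].
  by rewrite ger0_norm // (le_trans (ltW m0)).
have Cb := @CEbounds _ _ _ P (F s) (hFs (ltnW sT)) (hFm (ltnW sT)) _ _ hce mY bY _ _ hmM.
have p0 : 0 <= b s / b s.+1.
  by rewrite divr_ge0 // ltW // beta_gt0 // ?s1 ?(ltnW sT) //.
split; [|split].
- rewrite (_ : L s = fun w => powR (C w) (b s / b s.+1)); last by apply/funext => w; rewrite hLs.
  apply: (@sm_comp _ _ _ _ (hFs (ltnW sT)) (fun y => powR y (b s / b s.+1)) (measurable_powR _) C); by case: hce.
- by move=> w; rewrite hLs powR_ge0.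
- exists (powR m (b s / b s.+1)), (powR M (b s / b s.+1)); split; first exact: powR_gt0.
  apply: filterS Cb => w /andP[h1 h2]; rewrite hLs.
  have C0 : 0 <= C w by rewrite (le_trans (ltW m0)).
  by rewrite !ge0_ler_powR // ?nnegrE // ?(ltW m0) // (le_trans C0).
Qed.

Lemma L_props {t} : (1 <= t <= T)%N -> Lprop t.
Proof.
move=> /andP[t1 tT]; have := @L_props_aux (T - t)%N.
by rewrite subKn //; apply; lia.
Qed.

Lemma L_meas {t} : (1 <= t <= T)%N -> measurable_fun setT (L t).
Proof. move=> h; have [sm _] := L_props h; apply: smT sm; by case/andP: h. Qed.

Lemma L_ge0 {t} : (1 <= t <= T)%N -> forall w, 0 <= L t w.
Proof. by move=> h; have [_ [? _]] := L_props h. Qed.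

Lemma L_bdd {t} : (1 <= t <= T)%N -> aebdd P (L t).
Proof.
move=> h; have [_ [_ [m [M [m0 hmM]]]]] := L_props h.
exists M; apply: filterS hmM => w /andP[h1 h2].
by rewrite ger0_norm // (le_trans (ltW m0)).
Qed.

Lemma L_pos {t} : (1 <= t <= T)%N -> {ae P, forall w, 0 < L t w}.
Proof.
move=> h; have [_ [_ [m [M [m0 hmM]]]]] := L_props h.
by apply: filterS hmM => w /andP[h1 _]; rewrite (lt_le_trans m0).
Qed.

Lemma ell_sm {t} : (1 <= t <= T)%N -> sub_measurable (F t) (fun w => ln (L t w)).
Proof.
move=> h; have [sm _] := L_props h.
have tT : (t <= T)%N by case/andP: h.
exact: (@sm_comp _ _ _ _ (hFs tT) (@ln R) (@measurable_ln R) (L t) sm).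
Qed.

Lemma ell_bdd {t} : (1 <= t <= T)%N -> aebdd P (fun w => ln (L t w)).
Proof.
move=> h; have [_ [_ [m [M [m0 hmM]]]]] := L_props h.
exists (`|ln m| + `|ln M|); apply: filterS hmM => w /andP[h1 h2].
have Lp : 0 < L t w by rewrite (lt_le_trans m0).
have Mp : 0 < M by rewrite (lt_le_trans Lp).
have l1 : ln m <= ln (L t w) by rewrite ler_ln // posrE.
have l2 : ln (L t w) <= ln M by rewrite ler_ln // posrE.
have n1 := ler_norm (- ln m); rewrite normrN in n1.
have n2 := ler_norm (ln M).
have n3 := normr_ge0 (ln M).
have n4 := normr_ge0 (ln m).
rewrite ler_norml; apply/andP; split; lra.
Qed.

Lemma ellT w : ln (L T w) = alpha T * Z w.
Proof. by rewrite L_T_eq expRK. Qed.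

Definition Yt (t : nat) (w : Omega) : R := (alpha t)^-1 * (b 1 * x - ln (L t w) +
  \sum_(1 <= k < t) b k.+1 / alpha k * ln (L k w)).

Lemma Yt_sm {t} : (1 <= t <= T)%N -> sub_measurable (F t) (Yt t).
Proof.
move=> /andP[t1 tT]; have hG := hFs tT.
apply: (sm_mul hG); first exact: sm_cst.
apply: (sm_add hG); first apply: (sm_sub hG); first exact: sm_cst.
  by apply: ell_sm; rewrite t1 tT.
apply: (sm_sum hG) => k /andP[k1 kt]; apply: (sm_mul hG); first exact: sm_cst.
apply: (@sm_up k) => //; first exact: ltnW.
by apply: ell_sm; rewrite k1 /= (leq_trans (ltnW kt)).
Qed.

Lemma Yt_bdd {t} : (1 <= t <= T)%N -> aebdd P (Yt t).
Proof.
move=> /andP[t1 tT].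
apply: aebddM; first exact: aebdd_cst.
apply: aebddD; first apply: aebddB; first exact: aebdd_cst.
  by apply: ell_bdd; rewrite t1 tT.
apply: aebdd_sum => k /andP[k1 kt]; apply: aebddM; first exact: aebdd_cst.
by apply: ell_bdd; rewrite k1 /= (leq_trans (ltnW kt)).
Qed.

Lemma Yt_sum w : \sum_(1 <= t < T.+1) Yt t w = x - Z w.
Proof.
pose ia t := (alpha t)^-1.
pose q k := b k.+1 / alpha k.
pose l k := ln (L k w).
have e1 : \sum_(1 <= t < T.+1) Yt t w = b 1 * x * \sum_(1 <= t < T.+1) ia t
   - \sum_(1 <= t < T.+1) ia t * l t
   + \sum_(1 <= t < T.+1) ia t * (\sum_(1 <= k < t) q k * l k).
  rewrite mulr_sumr -sumrB -big_split /=; apply: eq_bigr => t _.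
  by rewrite /Yt /ia /l /q; ring.
have e2 := @telesc R T ia q l T (leqnn T).
rewrite e1 e2.
have H0 : \sum_(T.+1 <= i < T.+1) ia i = 0 by rewrite big_geq.
rewrite H0.
have b1 : b 1 * \sum_(1 <= t < T.+1) ia t = 1.
  by rewrite /ia -beta_inv mulfV // beta_neq0 // hT.
have e3 : \sum_(1 <= k < T.+1) q k * l k * (\sum_(k.+1 <= i < T.+1) ia i - 0)
    = \sum_(1 <= k < T) ia k * l k.
  rewrite big_nat_recr //= [\sum_(T.+1 <= i < T.+1) _]big_geq // subrr mulr0 addr0.
  apply: eq_big_nat => k /andP[k1 kT]; rewrite subr0 -beta_inv /q /ia.
  have kT' : (1 <= k.+1 <= T)%N by rewrite ltnS kT andbT.
  by field; rewrite beta_neq0 // alpha_neq0 // k1 /= ltnW.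
rewrite e3.
rewrite mulrAC b1 mul1r (big_nat_recr T) //=.
rewrite /ia /l ellT; field.
by rewrite alpha_neq0 // hT leqnn.
Qed.

Lemma BfacS t w : Bfac r t.+1 w = Bfac r t w * (1 + r t.+1 w).
Proof. by rewrite /Bfac big_nat_recr. Qed.

Lemma Bfac0 w : Bfac r 0 w = 1.
Proof. by rewrite /Bfac big_geq. Qed.

Lemma Bfac_ge1 t w : (t <= T)%N -> 1 <= Bfac r t w.
Proof.
have [M hM] := hr_bdd.
elim: t => [|t IH] tT; first by rewrite Bfac0.
rewrite BfacS; apply: mulr_ege1; first exact: IH (ltnW tT).
have := hM t.+1 w; rewrite tT /= => /(_ isT) /andP[h _].
by rewrite lerDl.
Qed.

Lemma Bfac_gt0 t w : (t <= T)%N -> 0 < Bfac r t w.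
Proof. by move=> tT; rewrite (lt_le_trans ltr01) // Bfac_ge1. Qed.

Lemma Bfac_bdd t : (t <= T)%N -> aebdd P (Bfac r t).
Proof.
have [M hM] := hr_bdd.
move=> tT; exists ((1 + M) ^+ t); apply: aeW => w.
elim: t tT => [|t IH] tT; first by rewrite Bfac0 normr1 expr0.
have h1 := Bfac_ge1 t w (ltnW tT).
have := hM t.+1 w; rewrite tT /= => /(_ isT) /andP[h2 h3].
rewrite BfacS normrM exprSr ler_pM //; first exact: IH (ltnW tT).
by rewrite ger0_norm ?lerD2l // addr_ge0.
Qed.

Lemma Bfac_sm t : (t <= T)%N -> sub_measurable (F t) (Bfac r t).
Proof.
elim: t => [|t IH] tT.
  rewrite (_ : Bfac r 0 = fun=> 1); last by apply/funext => w; rewrite Bfac0.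
  exact: (sm_cst (hFs tT)).
rewrite (_ : Bfac r t.+1 = fun w => Bfac r t w * (1 + r t.+1 w)); last by apply/funext => w; rewrite BfacS.
apply: (sm_mul (hFs tT)).
  by apply: (@sm_up t t.+1 _ (leqnSn t) tT); exact: IH (ltnW tT).
apply: (sm_add (hFs tT)); first exact: (sm_cst (hFs tT)).
apply: (@sm_up t t.+1 _ (leqnSn t) tT).
by have := hr_pred t.+1; rewrite tT /=; apply.
Qed.

Lemma discE (V : nat -> Omega -> R) t w : (t <= T)%N ->
  disc r V t w = V t w * expR (- ln (Bfac r t w)).
Proof. by move=> tT; rewrite /disc expRN lnK // posrE Bfac_gt0. Qed.

Lemma disc_sm (V : nat -> Omega -> R) t : (t <= T)%N -> sub_measurable (F t) (V t) ->
  sub_measurable (F t) (disc r V t).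
Proof.
move=> tT hV.
rewrite (_ : disc r V t = fun w => V t w * expR (- ln (Bfac r t w))); last first.
  by apply/funext => w; rewrite discE.
apply: (sm_mul (hFs tT)) => //.
apply: (@sm_comp _ _ _ _ (hFs tT) (fun y => expR (- ln y))) => //.
  by apply: measurableT_comp; [exact: measurable_expR|exact: measurable_funN].
exact: Bfac_sm.
Qed.

Lemma disc_bdd (V : nat -> Omega -> R) t : (t <= T)%N -> aebdd P (V t) ->
  aebdd P (disc r V t).
Proof.
move=> tT [K hK]; exists K; apply: filterS hK => w h.
have B1 := Bfac_ge1 t w tT; have B0 := Bfac_gt0 t w tT.
rewrite /disc normrM normfV (ger0_norm (ltW B0)) ler_pdivrMr // (le_trans h) //.
by rewrite ler_peMr // (le_trans (normr_ge0 _) h).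
Qed.

Definition Yopt (t : nat) (w : Omega) : R := Bfac r t w * Yt t w.

Lemma disc_Yopt t w : (t <= T)%N -> disc r Yopt t w = Yt t w.
Proof.
move=> tT; rewrite /disc /Yopt mulrC mulrA mulVf ?mul1r //.
by rewrite gt_eqF // Bfac_gt0.
Qed.

Lemma Yopt_adm : admissible P T F r (fun w => x - Z w) Yopt.
Proof.
split.
  move=> t /andP[t1 tT]; have hG := hFs tT.
  have sm : sub_measurable (F t) (Yopt t).
    by apply: (sm_mul hG); [exact: Bfac_sm|apply: Yt_sm; rewrite t1 tT].
  split => //; split.
    exact: (@sm_up t T _ tT (leqnn T) sm).
  by apply: aebddM; [exact: Bfac_bdd|apply: Yt_bdd; rewrite t1 tT].
apply: aeW => w; rewrite -Yt_sum; apply: eq_big_nat => t /andP[_ tT].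
by rewrite disc_Yopt.
Qed.

Definition Mg (t : nat) (w : Omega) : R := expR (- alpha t * Yt t w).

Lemma Mg_sm {t} : (1 <= t <= T)%N -> sub_measurable (F t) (Mg t).
Proof.
move=> h; have tT : (t <= T)%N by case/andP: h.
apply: (@sm_comp _ _ _ _ (hFs tT) expR (@measurable_expR R) (fun w => - alpha t * Yt t w)).
apply: (sm_mul (hFs tT)); first exact: (sm_cst (hFs tT)).
exact: Yt_sm.
Qed.

Lemma Mg_bdd {t} : (1 <= t <= T)%N -> aebdd P (Mg t).
Proof.
move=> h; apply: (@aebdd_expR _ _ _ P (fun w => - alpha t * Yt t w)).
by apply: aebddM; [exact: aebdd_cst|exact: Yt_bdd].
Qed.

Lemma Mg_gt0 t w : 0 < Mg t w.
Proof. exact: expR_gt0. Qed.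

Lemma K1 {s} {D : Omega -> R} : (1 <= s)%N -> (s < T)%N ->
  sub_measurable (F s) D -> aebdd P D ->
  (\int[P]_w (Mg s.+1 w * D w)%:E = \int[P]_w (Mg s w * D w)%:E)%E.
Proof.
move=> s1 sT hD bD.
have [C [hce hLs]] := L_rec s s1 sT.
have sTl : (s <= T)%N := ltnW sT.
have hG := hFs sTl.
have sGm := hFm sTl.
have hs : (1 <= s <= T)%N by rewrite s1 sTl.
have hs1 : (1 <= s.+1 <= T)%N by rewrite sT.
pose S w := \sum_(1 <= k < s) b k.+1 / alpha k * ln (L k w).
pose q := b s.+1 / alpha s.
pose p := b s / b s.+1.
pose Gs w := expR (- (b 1 * x + S w + q * ln (L s w))).
have an0 := alpha_neq0 hs; have an1 := alpha_neq0 hs1.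
have bn0 := beta_neq0 hs; have bn1 := beta_neq0 hs1.
have eM1 w : 0 < L s.+1 w -> Mg s.+1 w = L s.+1 w * Gs w.
  move=> Lp; rewrite /Mg /Gs -{1}(lnK Lp) -expRD; congr expR.
  rewrite /Yt big_nat_recr //= -/(S w) -/q; field.
  exact: an1.
have hp : (1 + q) * p = 1.
  have -> : (1 + q) * p = b s * ((alpha s)^-1 + (b s.+1)^-1).
    by rewrite /q /p; field; rewrite an0 bn1.
  by rewrite -beta_rec // mulfV.
have eM0 w : 0 < C w -> Mg s w = C w * Gs w.
  move=> Cp; rewrite /Mg /Gs -{1}(lnK Cp) -expRD; congr expR.
  rewrite /Yt hLs ln_powR -/p -/(S w).
  set lc := ln (C w).
  have h0 : lc * ((1 + q) * p - 1) = 0 by rewrite hp subrr mulr0.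
  rewrite -[RHS]addr0 -h0; field.
  exact: an0.
have Ssm : sub_measurable (F s) S.
  apply: (sm_sum hG) => k /andP[k1 ks]; apply: (sm_mul hG); first exact: (sm_cst hG).
  apply: (@sm_up k s _ (ltnW ks) sTl).
  by apply: ell_sm; rewrite k1 /= (leq_trans (ltnW ks) sTl).
have Sbd : aebdd P S.
  apply: aebdd_sum => k /andP[k1 ks]; apply: aebddM; first exact: aebdd_cst.
  by apply: ell_bdd; rewrite k1 /= (leq_trans (ltnW ks) sTl).
have Gsm : sub_measurable (F s) Gs.
  apply: (@sm_comp _ _ _ _ hG expR (@measurable_expR R) (fun w => - (b 1 * x + S w + q * ln (L s w)))).
  apply: (sm_opp hG); apply: (sm_add hG); first apply: (sm_add hG) => //.
    exact: (sm_cst hG).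
  by apply: (sm_mul hG); [exact: (sm_cst hG)|exact: ell_sm].
have Gbd : aebdd P Gs.
  apply: (@aebdd_expR _ _ _ P (fun w => - (b 1 * x + S w + q * ln (L s w)))).
  apply: aebddN; apply: aebddD; first apply: aebddD => //; first exact: aebdd_cst.
  by apply: aebddM; [exact: aebdd_cst|exact: ell_bdd].
have GDsm : sub_measurable (F s) (fun w => Gs w * D w) by exact: (sm_mul hG).
have GDbd : aebdd P (fun w => Gs w * D w) by exact: aebddM.
have mD := smT sTl hD.
have mG := smT sTl Gsm.
have mM0 := smT sTl (Mg_sm hs).
have mM1 := smT sT (Mg_sm hs1).
have mL1 := L_meas hs1.
have mC : measurable_fun setT C by case: hce => hC _; exact: smT sTl hC.
have Cpos : {ae P, forall w, 0 < C w}.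
  have [_ [_ [m [M [m0 hmM]]]]] := L_props hs1.
  have := @CEbounds _ _ _ P (F s) hG sGm _ _ hce mL1 (L_bdd hs1) _ _ hmM.
  by apply: filterS => w /andP[h _]; rewrite (lt_le_trans m0).
transitivity (\int[P]_w (L s.+1 w * (Gs w * D w))%:E)%E.
  apply: ae_eq_integral => //.
  - by apply/measurable_EFinP; apply: measurable_funM.
  - by apply/measurable_EFinP; apply: measurable_funM => //; apply: measurable_funM.
  - by apply: filterS (L_pos hs1) => w Lp _; rewrite eM1 // mulrA.
rewrite (@CEapp _ _ _ P (F s) hG sGm _ _ hce mL1 (L_ge0 hs1) (L_bdd hs1) _ GDsm GDbd).
apply: ae_eq_integral => //.
- by apply/measurable_EFinP; apply: measurable_funM => //; apply: measurable_funM.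
- by apply/measurable_EFinP; apply: measurable_funM.
- by apply: filterS Cpos => w Cp _; rewrite eM0 // mulrA.
Qed.

Lemma K2 t (D : Omega -> R) : (1 <= t <= T)%N ->
  sub_measurable (F t) D -> aebdd P D ->
  (\int[P]_w (Mg t w * D w)%:E = \int[P]_w (Mg T w * D w)%:E)%E.
Proof.
move=> /andP[t1 tT]; have : (T - t + t = T)%N by lia.
move: (T - t)%N => n; elim: n t t1 tT D => [|n IH] t t1 tT D e hD bD.
  by rewrite add0n in e; rewrite e.
have tT' : (t < T)%N by lia.
rewrite -(K1 t1 tT' hD bD).
apply: IH => //; first lia.
exact: (@sm_up t t.+1 _ (leqnSn t) tT').
Qed.

Lemma meas_sum (G : nat -> Omega -> R) a c :
  (forall k, (a <= k < c)%N -> measurable_fun setT (G k)) ->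
  measurable_fun setT (fun w => \sum_(a <= k < c) G k w).
Proof.
elim: c => [|c IH] h.
  by rewrite (_ : (fun w => _) = fun=> 0); [exact: measurable_cst|apply/funext => w; rewrite big_geq].
have [ac|ca] := leqP a c; last first.
  by rewrite (_ : (fun w => _) = fun=> 0); [exact: measurable_cst|apply/funext => w; rewrite big_geq].
rewrite (_ : (fun w => _) = (fun w => \sum_(a <= k < c) G k w + G c w)); last first.
  by apply/funext => w; rewrite big_nat_recr.
apply: measurable_funD; first by apply: IH => k /andP[ak kc]; apply: h; rewrite ak ltnS ltnW.
by apply: h; rewrite ac leqnn.
Qed.

Lemma int_sum (G : nat -> Omega -> R) a c :
  (forall k, (a <= k < c)%N -> measurable_fun setT (G k) /\ aebdd P (G k)) ->
  (\int[P]_w (\sum_(a <= k < c) G k w)%:E = \sum_(a <= k < c) \int[P]_w (G k w)%:E)%E.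
Proof.
elim: c => [|c IH] h.
  rewrite big_geq // (eq_integral (fun=> 0%E)); last by move=> w _; rewrite big_geq.
  by rewrite integral0.
have [ac|ca] := leqP a c; last first.
  rewrite big_geq // (eq_integral (fun=> 0%E)); last by move=> w _; rewrite big_geq.
  by rewrite integral0.
have hk : forall k, (a <= k < c)%N -> measurable_fun setT (G k) /\ aebdd P (G k).
  by move=> k /andP[ak kc]; apply: h; rewrite ak ltnS ltnW.
have [mc bc] := h c (andb_true_intro (conj ac (leqnn c.+1))).
rewrite big_nat_recr //= -IH //.
rewrite (eq_integral (fun w => ((\sum_(a <= k < c) G k w)%:E + (G c w)%:E)%E)); last first.
  by move=> w _; rewrite big_nat_recr.
rewrite integralD_EFin //; last exact: int_bdd.
apply: int_bdd.
  by apply: meas_sum => k /hk [].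
by apply: aebdd_sum => k /hk [].
Qed.

Variables (X : nat -> Omega -> R)
  (hXadm : admissible P T F r (fun w => x - Z w) X)
  (hXopt : total_utility P T
             (fun t y => (alpha t)^-1 * (1 - expR (- alpha t * y))) r X
           = Uval P T F (fun t y => (alpha t)^-1 * (1 - expR (- alpha t * y))) r
               (fun w => x - Z w)).

Definition Uf := (fun t y => (alpha t)^-1 * (1 - expR (- alpha t * y))).
Definition Dt t w := disc r X t w - Yt t w.
Definition gap t w := Mg t w * (Dt t w - (alpha t)^-1 * (1 - expR (- alpha t * Dt t w))).

Lemma X_sm {t} : (1 <= t <= T)%N -> sub_measurable (F t) (X t).
Proof. by case: hXadm => h _ ht; case: (h t ht). Qed.

Lemma X_bdd {t} : (1 <= t <= T)%N -> aebdd P (X t).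
Proof. by case: hXadm => h _ ht; case: (h t ht) => _ [_ hb]. Qed.

Lemma Dt_sm {t} : (1 <= t <= T)%N -> sub_measurable (F t) (Dt t).
Proof.
move=> h; have tT : (t <= T)%N by case/andP: h.
apply: (sm_sub (hFs tT)); last exact: Yt_sm.
by apply: disc_sm => //; exact: X_sm.
Qed.

Lemma Dt_bdd {t} : (1 <= t <= T)%N -> aebdd P (Dt t).
Proof.
move=> h; have tT : (t <= T)%N by case/andP: h.
apply: aebddB; last exact: Yt_bdd.
by apply: disc_bdd => //; exact: X_bdd.
Qed.

Lemma uf_decomp t w : (1 <= t <= T)%N ->
  Uf t (disc r X t w) = Uf t (Yt t w) + Mg t w * Dt t w - gap t w.
Proof.
move=> h; have e : disc r X t w = Yt t w + Dt t w by rewrite /Dt addrC subrK.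
rewrite e /Uf /gap /Mg [- alpha t * (_ + _)]mulrDr expRD; ring.
Qed.

Lemma gap_ge0 t w : (1 <= t <= T)%N -> 0 <= gap t w.
Proof.
move=> h; have a0 := halpha _ h; rewrite /gap; apply: mulr_ge0; first exact: ltW (Mg_gt0 _ _).
have e : Dt t w - (alpha t)^-1 * (1 - expR (- alpha t * Dt t w)) =
   (alpha t)^-1 * (expR (- alpha t * Dt t w) - (1 + - alpha t * Dt t w)).
  by field; exact: alpha_neq0.
rewrite e; apply: mulr_ge0; first by rewrite invr_ge0 ltW.
by rewrite subr_ge0 expR_ge1Dx.
Qed.

Lemma gap_eq0 t w : (1 <= t <= T)%N -> gap t w = 0 -> Dt t w = 0.
Proof.
move=> h g0; have a0 := halpha _ h.
have [//|Dn0] := eqVneq (Dt t w) 0.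
have e : Dt t w - (alpha t)^-1 * (1 - expR (- alpha t * Dt t w)) =
   (alpha t)^-1 * (expR (- alpha t * Dt t w) - (1 + - alpha t * Dt t w)).
  by field; exact: alpha_neq0.
have : 0 < gap t w.
  rewrite /gap e; apply: mulr_gt0; first exact: Mg_gt0.
  apply: mulr_gt0; first by rewrite invr_gt0.
  rewrite subr_gt0 expR_gt1Dx //.
  by rewrite mulNr oppr_eq0 mulf_neq0 // alpha_neq0.
by rewrite g0 ltxx.
Qed.

Lemma gap_sm {t} : (1 <= t <= T)%N -> sub_measurable (F t) (gap t).
Proof.
move=> h; have tT : (t <= T)%N by case/andP: h.
have hG := hFs tT.
apply: (sm_mul hG); first exact: Mg_sm.
apply: (sm_sub hG); first exact: Dt_sm.
apply: (sm_mul hG); first exact: (sm_cst hG).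
apply: (sm_sub hG); first exact: (sm_cst hG).
apply: (@sm_comp _ _ _ _ hG expR (@measurable_expR R) (fun w => - alpha t * Dt t w)).
by apply: (sm_mul hG); [exact: (sm_cst hG)|exact: Dt_sm].
Qed.

Lemma gap_bdd {t} : (1 <= t <= T)%N -> aebdd P (gap t).
Proof.
move=> h; apply: aebddM; first exact: Mg_bdd.
apply: aebddB; first exact: Dt_bdd.
apply: aebddM; first exact: aebdd_cst.
apply: aebddB; first exact: aebdd_cst.
apply: (@aebdd_expR _ _ _ P (fun w => - alpha t * Dt t w)).
by apply: aebddM; [exact: aebdd_cst|exact: Dt_bdd].
Qed.

Lemma UfY_sm {t} : (1 <= t <= T)%N -> sub_measurable (F t) (fun w => Uf t (Yt t w)).
Proof.
move=> h; have tT : (t <= T)%N by case/andP: h.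
have hG := hFs tT.
apply: (sm_mul hG); first exact: (sm_cst hG).
apply: (sm_sub hG); first exact: (sm_cst hG).
exact: Mg_sm.
Qed.

Lemma UfY_bdd {t} : (1 <= t <= T)%N -> aebdd P (fun w => Uf t (Yt t w)).
Proof.
move=> h; apply: aebddM; first exact: aebdd_cst.
apply: aebddB; first exact: aebdd_cst.
exact: Mg_bdd.
Qed.

Lemma MD_sm {t} : (1 <= t <= T)%N -> sub_measurable (F t) (fun w => Mg t w * Dt t w).
Proof.
move=> h; have tT : (t <= T)%N by case/andP: h.
by apply: (sm_mul (hFs tT)); [exact: Mg_sm|exact: Dt_sm].
Qed.

Lemma MD_bdd {t} : (1 <= t <= T)%N -> aebdd P (fun w => Mg t w * Dt t w).
Proof. by move=> h; apply: aebddM; [exact: Mg_bdd|exact: Dt_bdd]. Qed.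

Definition IU t := fine (\int[P]_w (Uf t (Yt t w))%:E)%E.
Definition IM t := fine (\int[P]_w (Mg t w * Dt t w)%:E)%E.
Definition IG t := fine (\int[P]_w (gap t w)%:E)%E.

Lemma finI {t} {g : Omega -> R} : (t <= T)%N -> sub_measurable (F t) g -> aebdd P g ->
  (\int[P]_w (g w)%:E)%E = (fine (\int[P]_w (g w)%:E))%:E.
Proof.
move=> tT sg bg; rewrite fineK //; apply: integrable_fin_num => //.
apply: int_bdd => //; exact: smT sg.
Qed.

Lemma total_decomp t : (1 <= t <= T)%N ->
  (\int[P]_w (Uf t (disc r X t w))%:E = (IU t + IM t - IG t)%:E)%E.
Proof.
move=> h; have tT : (t <= T)%N by case/andP: h.
rewrite (eq_integral (fun w => ((Uf t (Yt t w) + Mg t w * Dt t w)%:E - (gap t w)%:E)%E)); last first.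
  by move=> w _; rewrite uf_decomp.
have iU := int_bdd P (smT tT (UfY_sm h)) (UfY_bdd h).
have iM := int_bdd P (smT tT (MD_sm h)) (MD_bdd h).
have iG := int_bdd P (smT tT (gap_sm h)) (gap_bdd h).
rewrite integralB_EFin //; last first.
  apply: int_bdd; first by apply: measurable_funD; [exact: smT tT (UfY_sm h)|exact: smT tT (MD_sm h)].
  by apply: aebddD; [exact: UfY_bdd|exact: MD_bdd].
rewrite (eq_integral (fun w => ((Uf t (Yt t w))%:E + (Mg t w * Dt t w)%:E)%E)) //.
rewrite integralD_EFin //.
rewrite /IU /IM /IG (finI tT (UfY_sm h) (UfY_bdd h)) (finI tT (MD_sm h) (MD_bdd h)).
by rewrite (finI tT (gap_sm h) (gap_bdd h)).
Qed.

Lemma leT {k} : (1 <= k <= T)%N -> (k <= T)%N.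
Proof. by case/andP. Qed.

Lemma IM_sum : \sum_(1 <= t < T.+1) IM t = 0.
Proof.
apply: EFin_inj; rewrite -sumEFin.
have hb : forall k, (1 <= k < T.+1)%N -> (1 <= k <= T)%N by move=> k; rewrite ltnS.
have hT' : (1 <= T <= T)%N by rewrite hT leqnn.
transitivity (\sum_(1 <= t < T.+1) \int[P]_w (Mg T w * Dt t w)%:E)%E.
  apply: eq_big_nat => t /hb h; have tT : (t <= T)%N by case/andP: h.
  by rewrite /IM -(finI tT (MD_sm h) (MD_bdd h)) (K2 _ _ h (Dt_sm h) (Dt_bdd h)).
rewrite -int_sum; last first.
  move=> k /hb h; split.
    by apply: measurable_funM; [exact: smT (leqnn T) (Mg_sm hT')|exact: smT (leT h) (Dt_sm h)].
  by apply: aebddM; [exact: Mg_bdd|exact: Dt_bdd].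
rewrite (@ae_eq_integral _ _ _ P setT (fun=> 0%E)) //.
- by rewrite integral0.
- apply/measurable_EFinP; apply: meas_sum => k /hb h.
  by apply: measurable_funM; [exact: smT (leqnn T) (Mg_sm hT')|exact: smT (leT h) (Dt_sm h)].
- case: hXadm => _ hs; apply: filterS hs => w hw _.
  rewrite -mulr_sumr /Dt sumrB hw Yt_sum subrr mulr0 //.
Qed.

Lemma IG_sum_le0 : \sum_(1 <= t < T.+1) IG t <= 0.
Proof.
have hb : forall k, (1 <= k < T.+1)%N -> (1 <= k <= T)%N by move=> k; rewrite ltnS.
have hge : (total_utility P T Uf r Yopt <= total_utility P T Uf r X)%E.
  rewrite /Uf hXopt; apply: ereal_sup_ubound; exists Yopt => //; exact: Yopt_adm.
have eX : total_utility P T Uf r X = (\sum_(1 <= t < T.+1) (IU t + IM t - IG t))%:E.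
  rewrite /total_utility -sumEFin; apply: eq_big_nat => t /hb h.
  exact: total_decomp h.
have eY : total_utility P T Uf r Yopt = (\sum_(1 <= t < T.+1) IU t)%:E.
  rewrite /total_utility -sumEFin; apply: eq_big_nat => t /hb h.
  have tT : (t <= T)%N by case/andP: h.
  rewrite (eq_integral (fun w => (Uf t (Yt t w))%:E)); last by move=> w _; rewrite disc_Yopt.
  exact: (finI tT (UfY_sm h) (UfY_bdd h)).
move: hge; rewrite eX eY lee_fin sumrB big_split /= IM_sum addr0.
lra.
Qed.

Lemma IG_ge0 t : (1 <= t <= T)%N -> 0 <= IG t.
Proof.
move=> h; rewrite /IG fine_ge0 //; apply: integral_ge0 => w _.
by rewrite lee_fin gap_ge0.
Qed.

Lemma IG_zero t : (1 <= t <= T)%N -> IG t = 0.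
Proof.
move=> h; apply/eqP; rewrite eq_le IG_ge0 // andbT.
apply: le_trans IG_sum_le0.
have tin : t \in index_iota 1 T.+1 by rewrite mem_index_iota ltnS.
rewrite /index_iota (bigD1_seq t) //=; last exact: iota_uniq.
rewrite lerDl big_seq_cond; apply: sumr_ge0 => k /andP[kin _].
by apply: IG_ge0; move: kin; rewrite mem_iota subnKC // ltnS.
Qed.

Lemma Dt_ae t : (1 <= t <= T)%N -> {ae P, forall w, Dt t w = 0}.
Proof.
move=> h; have tT : (t <= T)%N by case/andP: h.
have i0 : (\int[P]_w (gap t w)%:E = 0)%E.
  by rewrite (finI tT (gap_sm h) (gap_bdd h)) -/(IG t) IG_zero.
have i1 : (\int[P]_(w in setT) `|(gap t w)%:E| = 0)%E.
  rewrite -i0; apply: eq_integral => w _.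
  by rewrite gee0_abs // lee_fin gap_ge0.
have mg : measurable_fun setT (fun w => (gap t w)%:E).
  by apply/measurable_EFinP; exact: smT tT (gap_sm h).
have hae := (@ae_eq_integral_abs _ _ _ P setT measurableT _ mg).1 i1.
move: hae; rewrite /ae_eq => hae.
apply: (@filterS _ _ _ _ _ _ hae).
move=> w hw.
apply: gap_eq0 => //.
by have := hw Logic.I; case.
Qed.

Lemma main_ae t : (1 <= t <= T)%N -> {ae P, forall w, X t w = Bfac r t w * Yt t w}.
Proof.
move=> h; have tT : (t <= T)%N by case/andP: h.
apply: filterS (Dt_ae _ h) => w; rewrite /Dt /disc => /eqP; rewrite subr_eq0 => /eqP <-.
by rewrite mulrC divfK // gt_eqF // Bfac_gt0.
Qed.

End Main.

Theorem proposition3p5 (d : measure_display) (Omega : measurableType d)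
  (R : realType) (P : probability Omega R) (T : nat) (hT : (1 <= T)%N)
  (F : nat -> set (set Omega)) (hF : filtration T F)
  (r : nat -> Omega -> R)
  (hr_bdd : exists M : R, forall t w, (1 <= t <= T)%N -> 0 <= r t w <= M)
  (hr_pred : forall t, (1 <= t <= T)%N -> sub_measurable (F t.-1) (r t))
  (alpha : nat -> R) (halpha : forall t, (1 <= t <= T)%N -> 0 < alpha t)
  (x : R) (Z : Omega -> R) (hZ : Linfty P (F T) Z)
  (X : nat -> Omega -> R)
  (hXadm : admissible P T F r (fun w => x - Z w) X)
  (hXopt : total_utility P T
             (fun t y => (alpha t)^-1 * (1 - expR (- alpha t * y))) r X
           = Uval P T F (fun t y => (alpha t)^-1 * (1 - expR (- alpha t * y))) r
               (fun w => x - Z w))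
  (L : nat -> Omega -> R) (hL : is_L_family P T F alpha (fun w => - Z w) L) :
  {ae P, forall w, X 1%N w = Bfac r 1 w / alpha 1%N *
                     (beta T alpha 1 * x - ln (L 1%N w))} /\
  (forall t, (2 <= t <= T)%N ->
    {ae P, forall w, X t w = Bfac r t w / alpha t *
       (beta T alpha 1 * x - ln (L t w)
        + \sum_(1 <= k < t) beta T alpha k.+1 / alpha k * ln (L k w))}).
Proof.
have M := @main_ae d Omega R P T hT F hF r hr_bdd hr_pred alpha halpha x Z hZ L hL X hXadm hXopt.
split.
  apply: filterS (M 1%N _) => [w ->|]; last by rewrite leqnn hT.
  by rewrite /Yt big_geq // addr0 mulrA.
move=> t /andP[t2 tT]; apply: filterS (M t _) => [w ->|]; last by rewrite tT (leq_trans _ t2).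
by rewrite /Yt mulrA.
Qed.
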